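(* Let $\alpha$ be an admissible anisotropy. There exists $C>0$ such that for every $j\ge0$ and every $f\in\mathcal S'(\mathbb R^2)$ whose Fourier transform $\hat f$ is a locally square-integrable function, \[C^{-1}\sum_{(j_1,j_2)\in\Gamma_j(\alpha)}\|\phi_{j_1,j_2}\hat f\|_{L^2}^2\le\|g_j^\alpha\hat f\|_{L^2}^2\le C\sum_{(j_1,j_2)\in\Gamma_j(\alpha)}\|\phi_{j_1,j_2}\hat f\|_{L^2}^2,\] where $g_j^\alpha=\sum_{(j_1,j_2)\in\Gamma_j(\alpha)}\phi_{j_1,j_2}$.
   Context: $\mathbb N=\{0,1,2,\dots\}$, $[x]$ integer part. Admissible anisotropy: $\alpha_i\ge0$, $\alpha_1+\alpha_2=2$. Hyperbolic resolution of unity: $\theta_0\in\mathcal S(\mathbb R)$, $\theta_0\ge0$, supported in $[-2,2]$, $=1$ on $[-1,1]$; $\theta_j(t)=\theta_0(2^{-j}t)-\theta_0(2^{-(j-1)}t)$ ($j\ge1$), assumed nonnegative; $\phi_{j_1,j_2}(\xi)=\theta_{j_1}(\xi_1)\theta_{j_2}(\xi_2)$. $\Gamma_j(\alpha)=\Gamma_j^{HL}\cup\Gamma_j^{LH}\cup\Gamma_j^{HH}$ with $\Gamma_j^{HL}=\{(j_1,j_2)\in\mathbb N^2:[(j-1)\alpha_1]-1\le j_1\le[j\alpha_1]+1,\ 0\le j_2\le[(j-1)\alpha_2]-1\}$, $\Gamma_j^{LH}=\{(j_1,j_2)\in\mathbb N^2:0\le j_1\le[(j-1)\alpha_1]-1,\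 [(j-1)\alpha_2]-1\le j_2\le[j\alpha_2]+1\}$, $\Gamma_j^{HH}=\{(j_1,j_2)\in\mathbb N^2:[(j-1)\alpha_1]-1\le j_1\le[j\alpha_1]+1,\ [(j-1)\alpha_2]-1\le j_2\le[j\alpha_2]+1\}$. *)

(* Defs.v *)
From HB Require Import structures.
From mathcomp Require Import all_boot all_order all_algebra.
From mathcomp Require Import all_classical all_reals all_analysis.
Set Implicit Arguments. Unset Strict Implicit. Unset Printing Implicit Defensive.
Import Order.TTheory GRing.Theory Num.Theory.
Local Open Scope ring_scope.

Section Defs.
Variable R : realType.

Definition schwartz (f : R -> R) : Prop :=
  (forall n x, derivable (derive1n n f) x 1) /\
  (forall k n : nat, exists M : R, forall x, `|x| ^+ k * `|derive1n n f x| <= M).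

Definition theta (th0 : R -> R) (j : nat) (t : R) : R :=
  if j is j'.+1 then th0 (t / 2 ^+ j) - th0 (t / 2 ^+ j') else th0 t.

Definition phi (th0 : R -> R) (j1 j2 : nat) (xi : R * R) : R :=
  theta th0 j1 xi.1 * theta th0 j2 xi.2.

Definition ip (x : R) : int := Num.floor x.

Definition lowb (a : R) (j : nat) : int := ip ((j%:R - 1) * a) - 1.
Definition upb (a : R) (j : nat) : int := ip (j%:R * a) + 1.

Definition GammaHL (a1 a2 : R) (j j1 j2 : nat) : bool :=
  (lowb a1 j <= j1%:Z <= upb a1 j) && (j2%:Z <= ip ((j%:R - 1) * a2) - 1).
Definition GammaLH (a1 a2 : R) (j j1 j2 : nat) : bool :=
  (j1%:Z <= ip ((j%:R - 1) * a1) - 1) && (lowb a2 j <= j2%:Z <= upb a2 j).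
Definition GammaHH (a1 a2 : R) (j j1 j2 : nat) : bool :=
  (lowb a1 j <= j1%:Z <= upb a1 j) && (lowb a2 j <= j2%:Z <= upb a2 j).
Definition inGamma (a1 a2 : R) (j j1 j2 : nat) : bool :=
  [|| GammaHL a1 a2 j j1 j2, GammaLH a1 a2 j j1 j2 | GammaHH a1 a2 j j1 j2].

(* Enumeration bound: for admissible alpha (a_i <= 2), every (j1,j2) in
   Gamma_j satisfies j1, j2 <= [j a_i] + 1 <= 2j+1 < 2j+2, so summing over
   j1, j2 < 2j+2 filtered by inGamma is exactly the sum over Gamma_j. *)
Definition gbound (j : nat) : nat := (2 * j + 2)%N.

Definition gfun (th0 : R -> R) (a1 a2 : R) (j : nat) (xi : R * R) : R :=
  \sum_(j1 < gbound j) \sum_(j2 < gbound j | inGamma a1 a2 j j1 j2)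
     phi th0 j1 j2 xi.

Definition leb2 := ((@lebesgue_measure R) \x (@lebesgue_measure R))%E.

(* A complex-valued function F = u + i v on R^2 is given by its real and
   imaginary parts; |F|^2 = u^2 + v^2. *)
Definition L2sq (h : R * R -> R) (u v : R * R -> R) : \bar R :=
  (\int[leb2]_(xi in [set: R * R]) ((h xi * u xi) ^+ 2 + (h xi * v xi) ^+ 2)%:E)%E.

(* locally square integrable on R^2: measurable, and finite L^2 norm on
   every box [-r,r]^2 (hence on every compact set) *)
Definition locL2 (u v : R * R -> R) : Prop :=
  measurable_fun [set: R * R] u /\ measurable_fun [set: R * R] v /\
  forall r : R, (\int[leb2]_(xi in [set xi : R * R | (`|xi.1| <= r)%R /\ (`|xi.2| <= r)%R])
                   (u xi ^+ 2 + v xi ^+ 2)%:E < +oo)%E.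

End Defs.

(* Main.v *)
Require Import Defs.
Set Warnings "-all".
From HB Require Import structures.
From mathcomp Require Import all_boot all_order all_algebra.
From mathcomp Require Import all_classical all_reals all_analysis.
From mathcomp Require Import measurable_realfun.
From mathcomp Require Import ring lra zify.
Import Order.TTheory GRing.Theory Num.Theory.
Local Open Scope ring_scope.

Ltac bsimp := repeat match goal with |- context [if (?a < ?b)%N then _ else _] =>
  first [ have -> : (a < b)%N = true by lia | have -> : (a < b)%N = false by lia ] end.

Section S.
Variable R : realType.

Lemma sum2 N (F : nat -> R) m : (forall j, j != m -> j != m.+1 -> F j = 0) ->
  \sum_(j < N) F j = (if (m < N)%N then F m else 0) + (if (m.+1 < N)%N then F m.+1 else 0).
Proof.
move=> HF; elim: N => [|N IH]; first by rewrite big_ord0 !ltn0 addr0.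
rewrite big_ord_recr /= IH.
have : (N < m \/ N = m \/ N = m.+1 \/ m.+1 < N)%N by lia.
case=> [Nm|[->|[->|Nm]]]; bsimp.
- rewrite HF ?addr0 //; apply/eqP; lia.
- by rewrite ?add0r ?addr0.
- by rewrite ?add0r ?addr0.
- rewrite (HF N) ?addr0 //; apply/eqP; lia.
Qed.

Definition cut N (F : nat -> nat -> R) i j := if (i < N)%N && (j < N)%N then F i j else 0.

Lemma sum22 N (F : nat -> nat -> R) m1 m2 :
  (forall j1 j2, F j1 j2 != 0 -> ((j1 == m1) || (j1 == m1.+1)) && ((j2 == m2) || (j2 == m2.+1))) ->
  \sum_(j1 < N) \sum_(j2 < N) F j1 j2 =
  cut N F m1 m2 + cut N F m1 m2.+1 + cut N F m1.+1 m2 + cut N F m1.+1 m2.+1.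
Proof.
move=> HF.
have H0 : forall j1 j2, ~~ (((j1 == m1) || (j1 == m1.+1)) && ((j2 == m2) || (j2 == m2.+1))) -> F j1 j2 = 0.
  by move=> j1 j2 h; apply/eqP; apply: contraNT h; exact: HF.
rewrite (eq_bigr (fun j1 : 'I_N => (if (m2 < N)%N then F j1 m2 else 0) + (if (m2.+1 < N)%N then F j1 m2.+1 else 0))); last first.
  move=> j1 _; apply: sum2 => j h1 h2; apply: H0; by rewrite (negbTE h1) (negbTE h2) andbF.
rewrite (@sum2 N (fun j1 : nat => (if (m2 < N)%N then F j1 m2 else 0) + (if (m2.+1 < N)%N then F j1 m2.+1 else 0)) m1); last first.
  move=> j h1 h2; rewrite !H0 ?(negbTE h1, negbTE h2) //; by rewrite !if_same addr0.
rewrite /cut; case: (m1 < N)%N; case: (m1.+1 < N)%N; case: (m2 < N)%N; case: (m2.+1 < N)%N => /=;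
  rewrite ?(addr0, add0r, addrA) //.
Qed.

Variable th0 : R -> R.
Hypothesis hz : forall t, 2 < `|t| -> th0 t = 0.
Hypothesis h1 : forall t, `|t| <= 1 -> th0 t = 1.

Lemma normdiv (t : R) k : `|t / 2 ^+ k| = `|t| / 2 ^+ k.
Proof. by rewrite normrM normfV normrX (ger0_norm (ler0n _ 2)). Qed.

Lemma th_hi j t : theta th0 j t != 0 -> `|t| <= 2 ^+ j.+1.
Proof.
apply: contraTT; rewrite -ltNge negbK => ht; apply/eqP.
case: j ht => [|j] ht /=; first by rewrite hz // -(expr1 (2:R)).
rewrite !hz ?subrr //.
- rewrite normdiv ltr_pdivlMr ?exprn_gt0 //; apply: le_lt_trans ht.
  rewrite !exprS mulrA ler_pM2r ?exprn_gt0 //; lra.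
- by rewrite normdiv ltr_pdivlMr ?exprn_gt0 // -exprS.
Qed.

Lemma th_lo j t : (0 < j)%N -> theta th0 j t != 0 -> 2 ^+ j.-1 < `|t|.
Proof.
case: j => [//|j] _; apply: contraTT; rewrite -leNgt negbK => ht; apply/eqP => /=.
rewrite !h1 ?subrr //.
- by rewrite normdiv ler_pdivrMr ?exprn_gt0 // mul1r.
- rewrite normdiv ler_pdivrMr ?exprn_gt0 // mul1r; apply: le_trans ht _.
  by rewrite exprS ler_peMl ?exprn_ge0 //; lra.
Qed.

Lemma th_close j k t : theta th0 j t != 0 -> theta th0 k t != 0 -> (k <= j.+1)%N.
Proof.
move=> hj hk; rewrite leqNgt; apply/negP => jk.
have c := @th_lo k t ltac:(lia) hk; have b := @th_hi j t hj.
case: k hk jk c => [//|k] hk jk c /=.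
have : (2:R) ^+ j.+1 <= 2 ^+ k by rewrite ler_eXn2l; [lia|lra].
lra.
Qed.

Lemma th_supp t : exists m, forall j, theta th0 j t != 0 -> (j == m) || (j == m.+1).
Proof.
case: (pselect (exists j, theta th0 j t != 0)) => [ex|nex].
- case: (ex_minnP ex) => m hm hmin; exists m => j hj.
  have := hmin _ hj; have := @th_close m j t hm hj; lia.
- by exists 0%N => j hj; exfalso; apply: nex; exists j.
Qed.
End S.

Lemma th_pos_gen (R : realType) (th0 : R -> R) k t : (forall t, 0 <= th0 t) ->
  (forall (j : nat) t, (0 < j)%N -> 0 <= theta th0 j t) -> 0 <= theta th0 k t.
Proof. by case: k => [|k] H0 Hp; [exact: H0 | exact: Hp]. Qed.

Lemma mtheta (R : realType) (th0 : R -> R) k : measurable_fun setT th0 ->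
  measurable_fun setT (theta th0 k).
Proof.
move=> m; case: k => [//|k] /=.
apply: measurable_realfun.measurable_funB.
- by apply: (measurableT_comp m); exact: measurable_realfun.mulrr_measurable.
- by apply: (measurableT_comp m); exact: measurable_realfun.mulrr_measurable.
Qed.

Lemma mphi (R : realType) (th0 : R -> R) j1 j2 : measurable_fun setT th0 ->
  measurable_fun setT (phi th0 j1 j2).
Proof.
move=> m; apply: (@measurable_realfun.measurable_funM _ _ _ _ (fun xi : R * R => theta th0 j1 xi.1)
  (fun xi : R * R => theta th0 j2 xi.2)).
- exact: (measurableT_comp (mtheta _ _ j1 m) measurable_fst).
- exact: (measurableT_comp (mtheta _ _ j2 m) measurable_snd).
Qed.

Theorem lemma4 (R : realType) (th0 : R -> R) (a1 a2 : R) :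
  schwartz th0 ->
  (forall t, 0 <= th0 t) ->
  (forall t, 2 < `|t| -> th0 t = 0) ->
  (forall t, `|t| <= 1 -> th0 t = 1) ->
  (forall (j : nat) t, (0 < j)%N -> 0 <= theta th0 j t) ->
  0 <= a1 -> 0 <= a2 -> a1 + a2 = 2 ->
  exists C : R, 0 < C /\
    forall (j : nat) (u v : R * R -> R), locL2 u v ->
      let S := (\sum_(j1 < gbound j) \sum_(j2 < gbound j | inGamma a1 a2 j j1 j2)
                  L2sq (phi th0 j1 j2) u v)%E in
      ((C^-1)%:E * S <= L2sq (gfun th0 a1 a2 j) u v)%E /\
      (L2sq (gfun th0 a1 a2 j) u v <= C%:E * S)%E.
Proof.
move=> hs hth0 hz h1 hpos ha1 ha2 ha.
have mth0 : measurable_fun setT th0.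
  apply: measurable_realfun.continuous_measurable_fun => x.
  apply: differentiable_continuous; apply/derivable1_diffP.
  exact: (hs.1 0%N x).
exists 4; split; first lra.
move=> j u v [mu [mv _]] S.
set N := gbound j.
set P := inGamma a1 a2 j.
pose Hg j1 j2 (xi : R * R) := if P j1 j2 then phi th0 j1 j2 xi else 0.
pose w (xi : R * R) := u xi ^+ 2 + v xi ^+ 2.
pose G xi := \sum_(j1 < N) \sum_(j2 < N) Hg j1 j2 xi.
pose Q xi := \sum_(j1 < N) \sum_(j2 < N) (Hg j1 j2 xi) ^+ 2.
have thp k t : 0 <= theta th0 k t by exact: th_pos_gen.
have Hg0 j1 j2 xi : 0 <= Hg j1 j2 xi.
  by rewrite /Hg; case: (P j1 j2) => //; rewrite /phi mulr_ge0.
have w0 xi : 0 <= w xi by rewrite /w addr_ge0 // sqr_ge0.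
have mHg j1 j2 : measurable_fun setT (Hg j1 j2).
  by rewrite /Hg; case: (P j1 j2) => //; exact: mphi.
have mw : measurable_fun setT w.
  by apply: measurable_realfun.measurable_funD; apply: measurable_realfun.measurable_funX.
have mG : measurable_fun setT G.
  by apply: measurable_sum => j1; apply: measurable_sum => j2.
have mQ : measurable_fun setT Q.
  by apply: measurable_sum => j1; apply: measurable_sum => j2; apply: measurable_realfun.measurable_funX.
have pw xi : Q xi <= G xi ^+ 2 <= 4 * Q xi.
  have [m1 hm1] := @th_supp _ _ hz h1 xi.1.
  have [m2 hm2] := @th_supp _ _ hz h1 xi.2.
  have supp : forall j1 j2, Hg j1 j2 xi != 0 ->
      ((j1 == m1) || (j1 == m1.+1)) && ((j2 == m2) || (j2 == m2.+1)).
    move=> j1 j2; rewrite /Hg; case: (P j1 j2); last by rewrite eqxx.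
    by rewrite /phi mulf_eq0 negb_or => /andP[/hm1 -> /hm2 ->].
  have supp2 : forall j1 j2, (Hg j1 j2 xi) ^+ 2 != 0 ->
      ((j1 == m1) || (j1 == m1.+1)) && ((j2 == m2) || (j2 == m2.+1)).
    by move=> j1 j2; rewrite sqrf_eq0; exact: supp.
  rewrite /G /Q (sum22 _ _ _ _ _ supp) (sum22 _ _ _ _ _ supp2).
  have cutsq i k : cut _ N (fun j1 j2 => Hg j1 j2 xi ^+ 2) i k = (cut _ N (fun j1 j2 => Hg j1 j2 xi) i k) ^+ 2.
    by rewrite /cut; case: ifP => // _; rewrite expr0n.
  rewrite !cutsq.
  have cut0 i k : 0 <= cut _ N (fun j1 j2 => Hg j1 j2 xi) i k.
    by rewrite /cut; case: ifP.
  move: (cut0 m1 m2) (cut0 m1 m2.+1) (cut0 m1.+1 m2) (cut0 m1.+1 m2.+1).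
  set a := cut _ _ _ m1 m2; set b := cut _ _ _ m1 m2.+1; set c := cut _ _ _ m1.+1 m2; set d := cut _ _ _ m1.+1 m2.+1.
  move=> a0 b0 c0 d0.
  have := mulr_ge0 a0 b0; have := mulr_ge0 a0 c0; have := mulr_ge0 a0 d0.
  have := mulr_ge0 b0 c0; have := mulr_ge0 b0 d0; have := mulr_ge0 c0 d0.
  have := sqr_ge0 (a - b); have := sqr_ge0 (a - c); have := sqr_ge0 (a - d).
  have := sqr_ge0 (b - c); have := sqr_ge0 (b - d); have := sqr_ge0 (c - d).
  move=> *; apply/andP; split; nra.
have eqG : L2sq (gfun th0 a1 a2 j) u v = (\int[@leb2 R]_(xi in setT) (G xi ^+ 2 * w xi)%:E)%E.
  rewrite /L2sq; apply: eq_integral => xi _; congr EFin.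
  have -> : gfun th0 a1 a2 j xi = G xi.
    by rewrite /gfun /G; apply: eq_bigr => j1 _; rewrite big_mkcond.
  rewrite /w; ring.
have eqS : S = (\int[@leb2 R]_(xi in setT) (Q xi * w xi)%:E)%E.
  have mF j1 j2 : measurable_fun setT (EFin \o (fun xi => (Hg j1 j2 xi) ^+ 2 * w xi)).
    apply/measurable_EFinP; apply: measurable_realfun.measurable_funM => //.
    exact: measurable_realfun.measurable_funX.
  have F0 j1 j2 xi : (0 <= ((Hg j1 j2 xi) ^+ 2 * w xi)%:E)%E.
    by rewrite lee_fin mulr_ge0 // sqr_ge0.
  rewrite /S.
  transitivity (\sum_(j1 < N) \sum_(j2 < N)
     \int[@leb2 R]_(xi in setT) ((Hg j1 j2 xi) ^+ 2 * w xi)%:E)%E.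
    apply: eq_bigr => j1 _; rewrite big_mkcond; apply: eq_bigr => j2 _ /=.
    rewrite /Hg /P; case: (inGamma a1 a2 j j1 j2) => /=.
    - rewrite /L2sq; apply: eq_integral => xi _; congr EFin; rewrite /w; ring.
    - rewrite (eq_integral (fun _ => 0%E)) ?integral0 // => xi _.
      by rewrite expr0n mul0r.
  transitivity (\sum_(j1 < N) \int[@leb2 R]_(xi in setT)
     (\sum_(j2 < N) ((Hg j1 j2 xi) ^+ 2 * w xi)%:E))%E.
    apply: eq_bigr => j1 _.
    by rewrite ge0_integral_sum // => k; exact: mF.
  have mS j1 : measurable_fun setT (fun xi => \sum_(j2 < N) ((Hg j1 j2 xi) ^+ 2 * w xi)%:E)%E.
    by apply: emeasurable_sum => j2; exact: mF.
  have S0 j1 xi : (0 <= \sum_(j2 < N) ((Hg j1 j2 xi) ^+ 2 * w xi)%:E)%E.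
    by apply: sume_ge0 => j2 _; exact: F0.
  rewrite -ge0_integral_sum //; last by move=> k; exact: mS.
  apply: eq_integral => xi _.
  under eq_bigr do rewrite sumEFin.
  rewrite sumEFin; congr EFin.
  rewrite /Q big_distrl; apply: eq_bigr => j1 _ /=.
  by rewrite big_distrl.
have mQr : measurable_fun setT (fun xi => Q xi * w xi).
  exact: measurable_realfun.measurable_funM.
have mQw : measurable_fun setT (EFin \o (fun xi => Q xi * w xi)).
  by apply/measurable_EFinP; apply: measurable_realfun.measurable_funM.
have mGw : measurable_fun setT (EFin \o (fun xi => G xi ^+ 2 * w xi)).
  apply/measurable_EFinP; apply: measurable_realfun.measurable_funM => //.
  exact: measurable_realfun.measurable_funX.
have Q0 xi : 0 <= Q xi by have := pw xi; have := sqr_ge0 (G xi); nra.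
have Qw0 xi : (0 <= (Q xi * w xi)%:E)%E by rewrite lee_fin mulr_ge0.
split.
- rewrite eqS eqG -ge0_integralZl_EFin //.
  under eq_integral do rewrite -EFinM.
  apply: ge0_le_integral => //.
  + by move=> xi _; rewrite lee_fin !mulr_ge0 // invr_ge0.
  + apply/measurable_EFinP.
    exact: (measurable_funM (f := cst 4^-1) (g := fun x => Q x * w x) (measurable_cst _) mQr).
  + move=> xi _; rewrite lee_fin; have := pw xi; have := w0 xi; have := Q0 xi.
    move=> h0 h2 /andP[h3 h4]; nra.
- rewrite eqS eqG -ge0_integralZl_EFin //.
  under eq_integral do rewrite -EFinM.
  apply: ge0_le_integral => //.
  + by move=> xi _; rewrite lee_fin mulr_ge0 // ?sqr_ge0.
  + apply/measurable_EFinP.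
    exact: (measurable_funM (f := cst 4) (g := fun x => Q x * w x) (measurable_cst _) mQr).
  + move=> xi _; rewrite lee_fin; have := pw xi; have := w0 xi; have := Q0 xi.
    move=> h0 h2 /andP[h3 h4]; nra.
Qed.
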